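(* Let $K\subset\mathbb{R}^n$ and $C\subset\mathbb{R}^m$ be nonempty, convex, closed and bounded sets, and let $f,h:\mathbb{R}^n\times\mathbb{R}^m\to\mathbb{R}$ be continuous functions such that, for every $y\in K$, $f(y,\cdot)$ and $h(y,\cdot)$ are convex, and such that $f$ takes only positive values. Fix $y\in K$. Let $(\varepsilon_k)$ be a sequence of positive numbers with $\varepsilon_k\to0$, and let $x_k\in\mathcal{S}_{\varepsilon_k}(y)$ for every $k$. If $x_k\to\bar x$, then $\bar x\in\widetilde{\mathcal{S}}(y)$.
   Context: $f^2=(f)^2$. $\mathcal{S}(y)=\operatorname{argmin}\{h(y,z)\mid z\in C\}$; for $\varepsilon>0$, $\mathcal{S}_\varepsilon(y)=\operatorname{argmin}\{h(y,z)+\varepsilon f^2(y,z)\mid z\in C\}$; $\widetilde{\mathcal{S}}(y)=\operatorname{argmin}\{f^2(y,z)\mid z\in\mathcal{S}(y)\}$. *)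

(* Defs.v *)
From HB Require Import structures.
From mathcomp Require Import all_boot all_order all_algebra.
From mathcomp Require Import all_classical all_reals all_analysis.
Set Implicit Arguments. Unset Strict Implicit. Unset Printing Implicit Defensive.
Import Order.TTheory GRing.Theory Num.Theory.
Import numFieldNormedType.Exports.
Local Open Scope classical_set_scope.
Local Open Scope ring_scope.

Section Defs.
Variable R : realType.

Definition convex_set_rV (p : nat) (A : set 'rV[R]_p) : Prop :=
  forall x z (t : R), A x -> A z -> 0 <= t <= 1 -> A (t *: x + (1 - t) *: z).

Definition convex_fun_rV (p : nat) (g : 'rV[R]_p -> R) : Prop :=
  forall x z (t : R), 0 <= t <= 1 ->
    g (t *: x + (1 - t) *: z) <= t * g x + (1 - t) * g z.

Definition argmin_set (p : nat) (phi : 'rV[R]_p -> R) (A : set 'rV[R]_p)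
  : set 'rV[R]_p := [set z | A z /\ forall w, A w -> phi z <= phi w].

Variables (n m : nat) (f h : 'rV[R]_n -> 'rV[R]_m -> R) (C : set 'rV[R]_m).

Definition Ssol (y : 'rV[R]_n) : set 'rV[R]_m := argmin_set (h y) C.

Definition Seps (eps : R) (y : 'rV[R]_n) : set 'rV[R]_m :=
  argmin_set (fun z => h y z + eps * (f y z) ^+ 2) C.

Definition Stilde (y : 'rV[R]_n) : set 'rV[R]_m :=
  argmin_set (fun z => (f y z) ^+ 2) (Ssol y).

End Defs.

(* Main.v *)
Require Import Defs.
From HB Require Import structures.
From mathcomp Require Import all_boot all_order all_algebra.
From mathcomp Require Import all_classical all_reals all_analysis.
From mathcomp Require Import ring lra.
Import Order.TTheory GRing.Theory Num.Theory.
Import numFieldNormedType.Exports.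
Local Open Scope classical_set_scope.
Local Open Scope ring_scope.
Lemma le_cvg (R : realType) (u v : nat -> R) a b : u @ \oo --> a -> v @ \oo --> b ->
  (forall k, u k <= v k) -> a <= b.
Proof.
move=> Hu Hv Huv.
have <- := cvg_lim (@Rhausdorff R) Hu.
have <- := cvg_lim (@Rhausdorff R) Hv.
apply: ler_lim; [by apply/cvg_ex; exists a|by apply/cvg_ex; exists b|].
by near=> k; apply: Huv.
Unshelve. all: by end_near.
Qed.

Theorem lemma3p2 (R : realType) (n m : nat)
  (K : set 'rV[R]_n) (C : set 'rV[R]_m)
  (f h : 'rV[R]_n -> 'rV[R]_m -> R) :
  K !=set0 -> convex_set_rV K -> closed K -> bounded_set K ->
  C !=set0 -> convex_set_rV C -> closed C -> bounded_set C ->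
  continuous (fun p : 'rV[R]_n * 'rV[R]_m => f p.1 p.2) ->
  continuous (fun p : 'rV[R]_n * 'rV[R]_m => h p.1 p.2) ->
  (forall y, K y -> convex_fun_rV (f y)) ->
  (forall y, K y -> convex_fun_rV (h y)) ->
  (forall y z, 0 < f y z) ->
  forall (y : 'rV[R]_n), K y ->
  forall (eps : nat -> R) (x : nat -> 'rV[R]_m) (xbar : 'rV[R]_m),
    (forall k, 0 < eps k) ->
    eps @ \oo --> (0 : R) ->
    (forall k, Seps f h C (eps k) y (x k)) ->
    x @ \oo --> xbar ->
    Stilde f h C y xbar.
Proof.
move=> _ _ _ _ _ _ HC _ Hf Hh _ _ _ y _ eps x xbar Heps He Hs Hx.
have Hp : (fun k => (y, x k)) @ \oo --> (y, xbar) by apply: (cvg_pair (cvg_cst y) Hx).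
have hc : (fun k => h y (x k)) @ \oo --> h y xbar by exact: cvg_comp _ _ Hp (Hh (y, xbar)).
have fc : (fun k => f y (x k)) @ \oo --> f y xbar by exact: cvg_comp _ _ Hp (Hf (y, xbar)).
have xC : C xbar.
  apply: (closed_cvg _ HC _ _ Hx); near=> k; by case: (Hs k).
Unshelve. 2: by end_near.
have S1 : Ssol h C y xbar.
  split => // w Cw.
  apply: (@le_cvg R _ (fun k => h y w + eps k * f y w ^+ 2) _ _ hc).
    rewrite -[X in _ --> X]addr0; apply: cvgD; first exact: cvg_cst.
    rewrite -(mul0r (f y w ^+ 2)); apply: cvgM => //; exact: cvg_cst.
  move=> k; have [_ /(_ w Cw)] := Hs k.
  have : 0 <= eps k * f y (x k) ^+ 2 by apply: mulr_ge0; [exact: ltW | exact: sqr_ge0].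
  move=> H1 H2; lra.
split => // w [Cw Hw].
apply: (@le_cvg R (fun k => f y (x k) ^+ 2) _ _ _ _ (cvg_cst (f y w ^+ 2))).
  exact: cvgM.
move=> k; have [_ /(_ w Cw)] := Hs k.
have := Hw _ (proj1 (Hs k)).
move=> H1 H2; rewrite -(ler_pM2l (Heps k)).
lra.
Qed.
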